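(* Let $\Gamma$ be a finite simple graph and $A_\Gamma$ the associated right-angled Artin group with standard generating set $V(\Gamma)$, and let $X = V(\Gamma)\cup V(\Gamma)^{-1}$. If $\phi \in \mathrm{Aut}(A_\Gamma)$ is length-preserving (with respect to word length over $X$), then $\phi$ is a finite composition of inversions and graph automorphisms.
   Context: The right-angled Artin group (RAAG) of a finite simple graph $\Gamma$ is $A_\Gamma = \langle V(\Gamma) \mid [s,t]=1 \text{ for all } \{s,t\}\in E(\Gamma)\rangle$ (generators commute iff they are joined by an edge). For $g \in A_\Gamma$, $|g|$ denotes the length of a shortest word over $X$ representing $g$. An automorphism $\phi$ is length-preserving if $|\phi(g)| = |g|$ for every $g\in A_\Gamma$. An inversion is the automorphism sending one vertex $x\in V(\Gamma)$ to $x^{-1}$ and fixing all other vertices. A graph automorphism is the automorphism of $A_\Gamma$ induced by a graph automorphism of $\Gamma$ (permuting the vertex generators). *)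

(* Defs.v *)
From Stdlib Require Import Relations List.
From mathcomp Require Import all_boot all_fingroup.
Set Implicit Arguments. Unset Strict Implicit. Unset Printing Implicit Defensive.

(* A letter (v, b) over V is the generator v if b = false and v^{-1} if b = true;
   a word over X = V ∪ V^{-1} is a seq of letters. *)
Definition word (V : finType) := seq (V * bool)%type.

Definition inv_letter (V : finType) (a : V * bool) : V * bool := (a.1, ~~ a.2).
Definition inv_word (V : finType) (w : word V) : word V := rev (map (@inv_letter V) w).

(* Elementary moves in the presentation of A_Gamma (e = adjacency of Gamma):
   free cancellation x x^{-1} -> 1 and commutation of letters on adjacent vertices. *)
Inductive raag_step (V : finType) (e : rel V) : word V -> word V -> Prop :=
| raag_cancel (u v : word V) (a : V * bool) :
    raag_step e (u ++ a :: inv_letter a :: v) (u ++ v)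
| raag_comm (u v : word V) (a b : V * bool) :
    e a.1 b.1 -> raag_step e (u ++ a :: b :: v) (u ++ b :: a :: v).

Definition raag_eq (V : finType) (e : rel V) : relation (word V) :=
  clos_refl_sym_trans _ (raag_step e).

Definition raag_len (V : finType) (e : rel V) (w : word V) (n : nat) : Prop :=
  (exists w', raag_eq e w w' /\ size w' = n) /\
  (forall w', raag_eq e w w' -> n <= size w').

(* An endomorphism of A_Gamma is given by the images f v (words) of the generators. *)
Definition ext (V : finType) (f : V -> word V) (w : word V) : word V :=
  flatten (map (fun a : V * bool => if a.2 then inv_word (f a.1) else f a.1) w).

Definition is_hom (V : finType) (e : rel V) (f : V -> word V) : Prop :=
  forall s t, e s t -> raag_eq e (f s ++ f t) (f t ++ f s).

Definition id_map (V : finType) : V -> word V := fun v => [:: (v, false)].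

(* composition: (comp f g) = f o g *)
Definition aut_comp (V : finType) (f g : V -> word V) : V -> word V :=
  fun v => ext f (g v).

Definition is_aut (V : finType) (e : rel V) (f : V -> word V) : Prop :=
  is_hom e f /\
  exists g, is_hom e g /\
    forall v, raag_eq e (aut_comp f g v) (id_map v) /\ raag_eq e (aut_comp g f v) (id_map v).

Definition length_preserving (V : finType) (e : rel V) (f : V -> word V) : Prop :=
  forall w n, raag_len e (ext f w) n <-> raag_len e w n.

Definition inversion (V : finType) (x : V) : V -> word V :=
  fun v => [:: (v, v == x)].

Definition graph_aut (V : finType) (s : {perm V}) : V -> word V :=
  fun v => [:: (s v, false)].

Definition is_graph_automorphism (V : finType) (e : rel V) (s : {perm V}) : Prop :=
  forall u v, e (s u) (s v) = e u v.

Definition elementary (V : finType) (e : rel V) (h : V -> word V) : Prop :=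
  (exists x, h = inversion x) \/
  (exists s : {perm V}, is_graph_automorphism e s /\ h = graph_aut s).

Definition aut_eq (V : finType) (e : rel V) (f g : V -> word V) : Prop :=
  forall v, raag_eq e (f v) (g v).

(* Main.v *)
Require Import Defs.
From Stdlib Require Import Relations List ClassicalEpsilon.
From mathcomp Require Import all_boot all_fingroup ssralg ssrint.
Set Implicit Arguments. Unset Strict Implicit. Unset Printing Implicit Defensive.
Import GRing.Theory.

Section Aux.
Variable (V : finType) (e : rel V).

Lemma raag_eq_catr (w w' z : word V) : raag_eq e w w' -> raag_eq e (w ++ z) (w' ++ z).
Proof.
elim=> [x y st|x|x y _ IH|x y t _ IH1 _ IH2].
- apply: rst_step; case: st => [u v a|u v a b H]; rewrite -!catA /=.
  + exact: raag_cancel.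
  + exact: raag_comm.
- exact: rst_refl.
- exact: rst_sym.
- exact: rst_trans IH1 IH2.
Qed.

Lemma raag_eq_catl (w w' z : word V) : raag_eq e w w' -> raag_eq e (z ++ w) (z ++ w').
Proof.
elim=> [x y st|x|x y _ IH|x y t _ IH1 _ IH2].
- apply: rst_step; case: st => [u v a|u v a b H]; rewrite !catA.
  + exact: raag_cancel.
  + exact: raag_comm.
- exact: rst_refl.
- exact: rst_sym.
- exact: rst_trans IH1 IH2.
Qed.

Local Open Scope ring_scope.

Definition sgl (x : V) (a : V * bool) : int :=
  if a.1 == x then (if a.2 then -1 else 1) else 0.
Definition sg (x : V) (w : word V) : int := \sum_(a <- w) sgl x a.

Lemma sg_cat x w z : sg x (w ++ z) = sg x w + sg x z.
Proof. by rewrite /sg big_cat. Qed.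

Lemma sgl_inv x a : sgl x (inv_letter a) = - sgl x a.
Proof. by rewrite /sgl /inv_letter /=; case: (a.1 == x); case: a.2; rewrite ?opprK ?oppr0. Qed.

Lemma sg_step x w w' : raag_step e w w' -> sg x w = sg x w'.
Proof.
case=> [u v a|u v a b _]; rewrite !sg_cat /sg !big_cons.
- by rewrite sgl_inv addNKr.
- by congr (_ + _); rewrite addrCA.
Qed.

Lemma sg_eq x w w' : raag_eq e w w' -> sg x w = sg x w'.
Proof.
elim=> [y z st|y|y z _ IH|y z t _ IH1 _ IH2].
- exact: sg_step.
- by [].
- by rewrite IH.
- by rewrite IH1.
Qed.

Lemma sg_inv x w : sg x (inv_word w) = - sg x w.
Proof.
rewrite /sg /inv_word big_rev big_map -sumrN; apply: eq_bigr => a _.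
by rewrite /sgl /inv_letter /=; case: (a.1 == x); case: a.2; rewrite ?opprK ?oppr0.
Qed.

Definition sgn (a : V * bool) : int := if a.2 then -1 else 1.

Lemma sg_ext (g : V -> word V) x w :
  sg x (ext g w) = \sum_(y : V) sg y w * sg x (g y).
Proof.
elim: w => [|a w IH].
  by rewrite /sg /ext /= big_nil; apply/esym/big1 => y _; rewrite big_nil mul0r.
rewrite /ext /= -/(ext g w) sg_cat IH.
have -> : \sum_(y : V) sg y (a :: w) * sg x (g y) =
   \sum_(y : V) (sgl y a * sg x (g y)) + \sum_(y : V) sg y w * sg x (g y).
  by rewrite -big_split /=; apply: eq_bigr => y _; rewrite /sg big_cons mulrDl.
congr (_ + _).
rewrite (bigD1 a.1) //= big1 ?addr0; last first.
  by move=> y /negbTE ny; rewrite /sgl eq_sym ny mul0r.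
rewrite /sgl eqxx; case: a.2; rewrite ?sg_inv ?mul1r //.
by rewrite mulN1r.
Qed.

Definition swap01 (p : nat) : nat := if p == 0%N then 1%N else if p == 1%N then 0%N else p.
Definition swap12 (p : nat) : nat := if p == 1%N then 2%N else if p == 2%N then 1%N else p.
Definition fz (u w z : V) (p : nat) : nat :=
  if z == u then swap01 p else if z == w then swap12 p else p.
Definition ev u w (s : word V) (p : nat) : nat := foldr (fun a q => fz u w a.1 q) p s.

Lemma ev_cat u w s t p : ev u w (s ++ t) p = ev u w s (ev u w t p).
Proof. by rewrite /ev foldr_cat. Qed.

Lemma fz_inv u w z p : fz u w z (fz u w z p) = p.
Proof.
rewrite /fz; case: (z == u); last case: (z == w) => //.
- by case: p => [|[|p]].
- by case: p => [|[|[|p]]].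
Qed.

Lemma ev_step u w s s' : symmetric e -> ~~ e u w -> u != w -> raag_step e s s' ->
  forall p, ev u w s p = ev u w s' p.
Proof.
move=> esym nuw uw; case=> [x y a|x y a b H] p; rewrite !ev_cat /=.
- by rewrite fz_inv.
- congr (ev _ _ _ _).
  case ab: (a.1 == b.1); first by rewrite (eqP ab).
  rewrite /fz.
  case: (a.1 =P u) => [au|nau]; case: (b.1 =P u) => [bu|nbu]; try by rewrite au bu eqxx in ab.
  + case: (b.1 =P w) => [bw|nbw] //.
    by rewrite au bw (negbTE nuw) in H.
  + case: (a.1 =P w) => [aw|naw] //.
    by case: (b.1 =P w) => [bw|nbw] //; rewrite aw bu esym (negbTE nuw) in H.
  + by case: (a.1 =P w) => [aw|naw]; case: (b.1 =P w) => [bw|nbw] //;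
       rewrite aw bw eqxx in ab.
Qed.

Lemma ev_eq u w s s' : symmetric e -> ~~ e u w -> u != w -> raag_eq e s s' ->
  forall p, ev u w s p = ev u w s' p.
Proof.
move=> esym nuw uw; elim=> [y z st|y|y z _ IH|y z t _ IH1 _ IH2] p.
- exact: ev_step st p.
- by [].
- by rewrite IH.
- by rewrite IH1.
Qed.

Lemma noncomm (a b : V * bool) : symmetric e -> a.1 != b.1 ->
  raag_eq e [:: a; b] [:: b; a] -> e a.1 b.1.
Proof.
move=> esym ab H; apply/negPn/negP => nab.
have := ev_eq esym nab ab H 0%N.
have ba : (b.1 == a.1) = false by rewrite eq_sym (negbTE ab).
by rewrite /ev /= /fz !eqxx ba.
Qed.

Lemma forall_inv (s : seq V) : Forall (elementary e) (map (@inversion V) s).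
Proof. by elim: s => //= x s IH; constructor => //; left; exists x. Qed.

Lemma invs (s : seq V) v :
  foldr (@aut_comp V) (@id_map V) (map (@inversion V) s) v = [:: (v, odd (count_mem v s))].
Proof.
elim: s => [|x s IH] //=; rewrite /aut_comp IH /ext /= /inversion.
rewrite eq_sym; case: (x == v); rewrite /= ?add0n; case: (odd (count_mem v s)); by [].
Qed.

End Aux.

Theorem lemma2p3 (V : finType) (e : rel V)
  (e_sym : symmetric e) (e_irr : irreflexive e)
  (phi : V -> word V) :
  is_aut e phi -> length_preserving e phi ->
  exists l : list (V -> word V),
    Forall (elementary e) l /\ aut_eq e phi (foldr (@aut_comp V) (@id_map V) l).
Proof.
move=> [homphi [g [homg inv]]] lp.
have sg1 : forall (x : V) (a : V * bool), sg x [:: a] = sgl x a.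
  by move=> x a; rewrite /sg big_cons big_nil addr0.
have len1 : forall v, raag_len e [:: (v, false)] 1.
  move=> v; split; first by exists [:: (v, false)]; split => //; apply: rst_refl.
  case=> // H; have := sg_eq v H; rewrite sg1 /sg big_nil /sgl eqxx /=.
  by move/eqP; rewrite oner_eq0.
have ex1 : forall v, exists a, raag_eq e (phi v) [:: a].
  move=> v; have := (lp [:: (v, false)] 1%N).2 (len1 v).
  rewrite /ext /= cats0 => -[[w' [H s]] _].
  by case: w' H s => [|a [|]] // H _; exists a.
pose F v := proj1_sig (constructive_indefinite_description _ (ex1 v)).
have HF : forall v, raag_eq e (phi v) [:: F v].
  by move=> v; exact: (proj2_sig (constructive_indefinite_description _ (ex1 v))).
pose f v := (F v).1.
have key : forall v x, sgl x (v, false) =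
    (if (F v).2 then - sg x (g (f v)) else sg x (g (f v)))%R.
  move=> v x; have := sg_eq x (proj2 (inv v)).
  rewrite /aut_comp /id_map sg1 => <-.
  rewrite sg_ext.
  have -> : (\sum_(y : V) sg y (phi v) * sg x (g y) = sg x (ext g [:: F v]))%R.
    by rewrite sg_ext; apply: eq_bigr => y _; rewrite (sg_eq y (HF v)).
  rewrite /ext /= cats0 /f; case: (F v).2 => //; exact: sg_inv.
have finj : injective f.
  move=> v w fvw; apply/eqP/negPn/negP => nvw.
  have k1 := key v v; have k2 := key w v.
  rewrite /sgl /= eqxx in k1; rewrite /sgl /= eq_sym (negbTE nvw) -fvw in k2.
  move: k1 k2; case: (F v).2; case: (F w).2 => /= k1 k2. 1-4: move/eqP: k2; rewrite eq_sym ?oppr_eq0 => /eqP c0.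
  1-4: by move: k1; rewrite c0 ?oppr0 => /eqP; rewrite oner_eq0.
pose pi := perm finj.
have fwd : forall s t, e s t -> e (f s) (f t).
  move=> s t est.
  have st : s != t by apply/eqP => est'; rewrite est' e_irr in est.
  have fst : f s != f t by apply/eqP => /finj /eqP; apply/negP.
  apply: (noncomm e_sym fst).
  have H := homphi s t est.
  apply: (rst_trans _ _ _ (phi s ++ [:: F t])).
    by apply: (raag_eq_catr _ (rst_sym _ _ _ _ (HF s))).
  apply: (rst_trans _ _ _ (phi s ++ phi t)).
    by apply: (raag_eq_catl _ (rst_sym _ _ _ _ (HF t))).
  apply: (rst_trans _ _ _ _ _ H).
  apply: (rst_trans _ _ _ ([:: F t] ++ phi s)).
    by apply: (raag_eq_catr _ (HF t)).
  by apply: (raag_eq_catl _ (HF s)).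
have gaut : is_graph_automorphism e pi.
  pose A := [set p : V * V | e p.1 p.2].
  pose h := fun p : V * V => (pi p.1, pi p.2).
  have hinj : injective h.
    by move=> [a b] [c d] [] /perm_inj -> /perm_inj ->.
  have AB : A \subset h @^-1: A.
    by apply/subsetP => -[a b]; rewrite !inE /= !permE => /fwd.
  have : A == h @^-1: A. rewrite eqEcard AB (card_preimset _ hinj). exact: leqnn.
  move/eqP => EA u v.
  have : ((u, v) \in A) = ((u, v) \in h @^-1: A) by rewrite -EA.
  by rewrite !inE /=.
exists (graph_aut pi :: map (@inversion V) [seq x <- enum V | (F x).2]).
split.
  constructor; last exact: forall_inv.
  by right; exists pi.
move=> v /=; rewrite /aut_comp invs.
have -> : odd (count_mem v [seq x <- enum V | (F x).2]) = (F v).2.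
  rewrite count_uniq_mem; last by rewrite filter_uniq // enum_uniq.
  by rewrite mem_filter mem_enum andbT; case: (F v).2.
rewrite /ext /graph_aut /= permE /f.
have := HF v; case: (F v) => a b /=.
by case: b.
Qed.
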